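(* Let $A$ be a finite set and let $A^+=\bigcup_{n\in\mathbb{N}}A^n$ be the set of nonempty finite words over $A$. Then $(A^+,\le_{\mathrm{E}})$ is a well partially ordered set, i.e. $\le_{\mathrm{E}}$ is a partial order on $A^+$ satisfying the descending chain condition and having no infinite antichains; equivalently, for every sequence $(\mathbf{x}^{(k)})_{k\in\mathbb{N}}$ in $A^+$ there are $i<j$ with $\mathbf{x}^{(i)}\le_{\mathrm{E}}\mathbf{x}^{(j)}$.
   Context: For $\mathbf{a}=(a_1,\dots,a_n)\in A^+$ and $b\in A$, define $\mathrm{firstOcc}(\mathbf{a},b):=0$ if $b\notin\{a_1,\dots,a_n\}$ and $\mathrm{firstOcc}(\mathbf{a},b):=\min\{i : a_i=b\}$ otherwise. For $\mathbf{a}=(a_1,\dots,a_m)$, $\mathbf{b}=(b_1,\dots,b_n)\in A^+$, we write $\mathbf{a}\le_{\mathrm{E}}\mathbf{b}$ if there is a strictly increasing function $h:\{1,\dots,m\}\to\{1,\dots,n\}$ such that (1) $a_i=b_{h(i)}$ for all $i$; (2) $\{a_1,\dots,a_m\}=\{b_1,\dots,b_n\}$; (3) for every $c\in\{a_1,\dots,a_m\}$, $h(\mathrm{firstOcc}(\mathbf{a},c))=\mathrm{firstOcc}(\mathbf{b},c)$. Such an $h$ is said to witness $\mathbf{a}\le_{\mathrm{E}}\mathbf{b}$. *)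

(* Defs.v *)
From mathcomp Require Import all_boot.
Set Implicit Arguments. Unset Strict Implicit. Unset Printing Implicit Defensive.

(* Positions are 0-based: position i here corresponds to position i+1 in the
   paper, and the 0-based first occurrence of c in a is [index c a]
   (only used for c \in a, where the paper's firstOcc is nonzero). *)

Definition witnessE (A : eqType) (a b : seq A) (h : nat -> nat) : Prop :=
  [/\ (forall i j, i < j -> j < size a -> h i < h j),
      (forall i, i < size a -> h i < size b),
      (forall (x0 : A) i, i < size a -> nth x0 a i = nth x0 b (h i)),
      a =i b &
      (forall c, c \in a -> h (index c a) = index c b)].

Definition leE (A : eqType) (a b : seq A) : Prop := exists h, witnessE a b h.

(* Main.v *)
From Stdlib Require Import Classical ClassicalEpsilon.
Require Import Defs.
From mathcomp Require Import all_boot.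
Set Implicit Arguments. Unset Strict Implicit. Unset Printing Implicit Defensive.

Section Higman.
Variable T : finType.

Definition bad (f : nat -> seq T) := forall i j, i < j -> ~~ subseq (f i) (f j).
Definition ext (l : seq (seq T)) : Prop :=
  exists g, bad g /\ forall k, k < size l -> g k = nth [::] l k.

Lemma min_ext l : ext l -> exists w, ext (rcons l w) /\
   forall w', size w' < size w -> ~ ext (rcons l w').
Proof.
move=> [g [bg Hg]].
have E0 : ext (rcons l (g (size l))).
  exists g; split => // k; rewrite size_rcons ltnS leq_eqVlt nth_rcons.
  case/orP => [/eqP->|H]; first by rewrite ltnn eqxx.
  by rewrite H; apply: Hg.
suff HH: forall n w, size w <= n -> ext (rcons l w) -> exists w0, ext (rcons l w0) /\
   forall w', size w' < size w0 -> ~ ext (rcons l w').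
  exact: (HH _ _ (leqnn _) E0).
elim=> [|n IH] w Hw Ew.
  exists w; split => // w'; by rewrite ltnNge (leq_trans Hw).
case: (classic (exists w', size w' < size w /\ ext (rcons l w'))).
  move=> [w' [Hs E']]; apply: (IH w') => //; rewrite -ltnS; exact: leq_trans Hs Hw.
move=> Hn; exists w; split => // w' Hs E'; apply: Hn; by exists w'.
Qed.

Lemma nextw_ex l : exists w, ext l -> ext (rcons l w) /\
   forall w', size w' < size w -> ~ ext (rcons l w').
Proof.
case: (classic (ext l)) => [/min_ext [w Hw]|Hn]; first by exists w.
by exists [::].
Qed.

Definition nextw l := proj1_sig (constructive_indefinite_description _ (nextw_ex l)).
Lemma nextwP l : ext l -> ext (rcons l (nextw l)) /\
   forall w', size w' < size (nextw l) -> ~ ext (rcons l w').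
Proof. rewrite /nextw; case: constructive_indefinite_description => //. Qed.

Fixpoint pre n := if n is n'.+1 then rcons (pre n') (nextw (pre n')) else [::].
Definition fm n := nextw (pre n).

Lemma size_pre n : size (pre n) = n.
Proof. by elim: n => //= n IH; rewrite size_rcons IH. Qed.

Lemma nth_pre m k : k < m -> nth [::] (pre m) k = fm k.
Proof.
elim: m => // m IH; rewrite ltnS leq_eqVlt /= nth_rcons size_pre.
by case/orP => [/eqP->|H]; [rewrite ltnn eqxx | rewrite H IH].
Qed.

Hypothesis ext0 : ext [::].

Lemma ext_pre n : ext (pre n).
Proof. elim: n => //= n IH; exact: (nextwP IH).1. Qed.

Lemma fm_bad : bad fm.
Proof.
move=> i j ij; have [g [bg Hg]] := ext_pre j.+1.
have ij1 : j < j.+1 by [].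
have ii1 : i < j.+1 by rewrite ltnS ltnW.
rewrite -(nth_pre ij1) -(nth_pre ii1) -!Hg ?size_pre //.
exact: bg.
Qed.

Lemma fm_min n w : size w < size (fm n) -> ~ ext (rcons (pre n) w).
Proof. exact: (nextwP (ext_pre n)).2. Qed.

Lemma fm_nil n : fm n <> [::].
Proof. move=> E; have := fm_bad (ltnSn n); by rewrite E sub0seq. Qed.

Lemma pigeon : exists a, forall N, exists n, N <= n /\ ohead (fm n) = Some a.
Proof.
apply: NNPP => Hn.
have H1 : forall a, exists N, forall n, N <= n -> ohead (fm n) <> Some a.
  move=> a; apply: NNPP => H2; apply: Hn; exists a => N; apply: NNPP => H3.
  apply: H2; exists N => n Hn' E; apply: H3; by exists n.
have : forall s : seq T, exists N, forall a, a \in s -> forall n, N <= n ->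
   ohead (fm n) <> Some a.
  elim=> [|x s [N HN]]; first by exists 0.
  have [M HM] := H1 x; exists (maxn N M) => a; rewrite inE => /orP [/eqP->|Ha] n Hle.
    apply: HM; exact: leq_trans (leq_maxr _ _) Hle.
  apply: HN => //; exact: leq_trans (leq_maxl _ _) Hle.
move/(_ (enum T)) => [N HN].
have := @fm_nil N; case E: (fm N) => [|a t] // _.
by apply: (HN a (mem_enum _ a) N) => //; rewrite E.
Qed.

Lemma contra_ext : False.
Proof.
have [a Ha] := pigeon.
have Hn : forall n, exists m, n < m /\ ohead (fm m) = Some a by move=> n; exact: Ha n.+1.
pose nxt n := proj1_sig (constructive_indefinite_description _ (Hn n)).
have nxtP : forall n, n < nxt n /\ ohead (fm (nxt n)) = Some a.
  by move=> n; rewrite /nxt; case: constructive_indefinite_description.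
pose phi := fix phi k := if k is k'.+1 then nxt (phi k') else nxt 0.
have phiS : forall k, phi k < phi k.+1 by move=> k; exact: (nxtP _).1.
have phiA : forall k, ohead (fm (phi k)) = Some a by case=> [|k]; exact: (nxtP _).2.
have phiI : forall p q, p < q -> phi p < phi q.
  move=> p; elim=> // q IH; rewrite ltnS leq_eqVlt => /orP [/eqP->|H] //.
  exact: ltn_trans (IH H) (phiS q).
have phi0 : forall p, phi 0 <= phi p.
  by case=> [|p]; [exact: leqnn | apply: ltnW; apply: phiI].
have phiE : forall p, fm (phi p) = a :: behead (fm (phi p)).
  by move=> p; have := phiA p; case: (fm (phi p)) => //= x t [->].
set n0 := phi 0.
pose g k := if k < n0 then fm k else behead (fm (phi (k - n0))).
apply: (@fm_min n0 (behead (fm n0))).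
  have := @fm_nil n0; case: (fm n0) => //= x t _; by rewrite ltnSn.
exists g; split.
  move=> i j ij; rewrite /g.
  case: (ltnP j n0) => Hj.
    by rewrite (ltn_trans ij Hj); exact: fm_bad.
  case: (ltnP i n0) => Hi.
    apply/negP => Hs; have := fm_bad (leq_trans Hi (phi0 (j - n0))).
    rewrite (subseq_trans Hs) //.
    by rewrite [X in subseq _ X]phiE subseq_cons.
  have pq : i - n0 < j - n0 by rewrite ltn_sub2rE.
  apply/negP => Hs; have := fm_bad (phiI _ _ pq).
  by rewrite phiE [X in subseq _ X]phiE /= eqxx Hs.
move=> k; rewrite size_rcons size_pre ltnS leq_eqVlt nth_rcons size_pre /g.
case/orP => [/eqP->|H]; first by rewrite ltnn eqxx subnn.
by rewrite H nth_pre.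
Qed.

End Higman.

Lemma higman (T : finType) (f : nat -> seq T) : exists i j, i < j /\ subseq (f i) (f j).
Proof.
apply: NNPP => H; apply: (@contra_ext T).
exists f; split => // i j ij; apply/negP => Hs; apply: H; by exists i, j.
Qed.

Lemma subseq_idx (T : eqType) (t s : seq T) : subseq s t -> exists h : nat -> nat,
  [/\ (forall i j, i < j -> j < size s -> h i < h j),
      (forall i, i < size s -> h i < size t) &
      (forall x0 i, i < size s -> nth x0 s i = nth x0 t (h i))].
Proof.
elim: t s => [|y t IH] s.
  move/eqP->; exists id; split => //.
case: s => [|x s] /=.
  move=> _; exists id; split => //.
case: eqP => [->|_] /IH [h [h1 h2 h3]].
  exists (fun i => if i is i'.+1 then (h i').+1 else 0); split.
  - move=> [|i] [|j] //= ij jl; rewrite ltnS; exact: h1.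
  - by move=> [|i] //= il; rewrite ltnS; apply: h2.
  - by move=> x0 [|i] //= il; apply: h3.
exists (fun i => (h i).+1); split.
- move=> i j ij jl; rewrite ltnS; exact: h1.
- by move=> i il; rewrite ltnS; apply: h2.
- by move=> x0 i il; rewrite h3.
Qed.

Lemma inc_ge (h : nat -> nat) n : (forall i j, i < j -> j < n -> h i < h j) ->
  forall j, j < n -> forall i, i <= j -> h i + (j - i) <= h j.
Proof.
move=> Hh; elim=> [|j IH] jn i.
  by rewrite leqn0 => /eqP->; rewrite addn0.
rewrite leq_eqVlt => /orP [/eqP->|]; first by rewrite subnn addn0.
rewrite ltnS => ij.
have := IH (ltnW jn) _ ij; have := Hh _ _ (ltnSn j) jn.
rewrite subSn // addnS => H1 H2; exact: leq_ltn_trans H2 H1.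
Qed.

Section Main.
Variable A : finType.

Definition mk (a : seq A) : seq ((A * bool) * {set A}) :=
  map (fun p : A * nat => (p.1, p.2 == index p.1 a, [set z in a])) (zip a (iota 0 (size a))).

Lemma size_mk a : size (mk a) = size a.
Proof. by rewrite size_map size_zip size_iota minnn. Qed.

Lemma nth_mk x0 a i : i < size a ->
  nth (x0, false, set0) (mk a) i = (nth x0 a i, i == index (nth x0 a i) a, [set z in a]).
Proof.
move=> il; rewrite (nth_map (x0, 0)) ?size_zip ?size_iota ?minnn //.
by rewrite nth_zip ?size_iota //= nth_iota.
Qed.

Lemma mk_le a b : a <> [::] -> subseq (mk a) (mk b) -> leE a b.
Proof.
case: a => [|x0 a'] // _; set a := x0 :: a' => /subseq_idx [h [h1 h2 h3]].
rewrite size_mk in h1 h2 h3.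
have hb : forall i, i < size a -> h i < size b by move=> i /h2; rewrite size_mk.
have H3 := fun i il => h3 (x0, false, set0) i il.
have a0 : 0 < size a by [].
have Hab : [set z in a] = [set z in b].
  have := H3 0 a0. rewrite (nth_mk x0 a0). rewrite (nth_mk x0 (hb 0 a0)). by case.
have Eab : a =i b.
  move=> z; have := congr1 (fun S : {set A} => z \in S) Hab; rewrite /= !inE; exact.
have Hn : forall y0 i, i < size a -> nth y0 a i = nth y0 b (h i).
  move=> y0 i il; have := H3 i il; rewrite (nth_mk x0 il) (nth_mk x0 (hb i il)).
  case=> E _ _.
  rewrite (set_nth_default x0 y0 il) E (set_nth_default x0 y0 (hb i il)); exact: erefl.
exists h; split => //.
move=> c ca; have il : index c a < size a by rewrite index_mem.
have := H3 _ il; rewrite (nth_mk x0 il) (nth_mk x0 (hb _ il)) (nth_index x0 ca).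
case=> Ec; rewrite eqxx => /esym/eqP -> _; rewrite -Ec; reflexivity.
Qed.
End Main.
Theorem lemma3p1 (A : finType) :
  (* partial order on A^+ *)
  (forall a : seq A, a <> [::] -> leE a a) /\
  (forall a b : seq A, a <> [::] -> b <> [::] -> leE a b -> leE b a -> a = b) /\
  (forall a b c : seq A, a <> [::] -> b <> [::] -> c <> [::] ->
     leE a b -> leE b c -> leE a c) /\
  (* well-quasi-order: every sequence in A^+ is good *)
  (forall x : nat -> seq A, (forall k, x k <> [::]) ->
     exists i j, i < j /\ leE (x i) (x j)).
Proof.
split; [|split; [|split]].
- move=> a _; exists id; split => //.
- move=> a b an _ [h [h1 h2 h3 h4 h5]] [h' [h1' h2' h3' h4' h5']].
  have sz : forall (h : nat -> nat) n m, (forall i j, i < j -> j < n -> h i < h j) ->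
      (forall i, i < n -> h i < m) -> n <= m.
    move=> g [|n] m g1 g2 //.
    have := inc_ge g1 (ltnSn n) (leq0n n); rewrite subn0 => H.
    exact: leq_ltn_trans (leq_addl _ _) (leq_ltn_trans H (g2 _ (ltnSn n))).
  have Es : size a = size b by apply/eqP; rewrite eqn_leq (sz _ _ _ h1 h2) (sz _ _ _ h1' h2').
  case Ea : a => [|x0 a']; first by move: an; rewrite Ea.
  rewrite -Ea; apply: (eq_from_nth (x0:=x0) Es) => i il.
  rewrite h3 //; congr nth.
  apply/eqP; rewrite eqn_leq.
  have n1 : (size a).-1 < size a by rewrite Ea.
  have iln : i <= (size a).-1 by move: il; rewrite Ea.
  have := inc_ge h1 n1 iln; have := inc_ge h1 il (leq0n i).
  rewrite subn0 => H1 H2; rewrite (leq_trans (leq_addl _ _) H1) andbT.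
  have := h2 _ n1; rewrite -Es => H3.
  have H4 : h i + ((size a).-1 - i) < size a := leq_ltn_trans H2 H3.
  move: H4 iln; rewrite Ea /= ltnS => H4 iln.
  by rewrite -(leq_add2r (size a' - i)) subnKC.
- move=> a b c _ _ _ [h [h1 h2 h3 h4 h5]] [h' [h1' h2' h3' h4' h5']].
  have bs : forall i, i < size a -> h i < size b := h2.
  exists (fun i => h' (h i)); split.
  + move=> i j ij jl; apply: h1'; [exact: h1 | exact: bs].
  + move=> i il; exact: h2' (bs _ il).
  + move=> x0 i il; rewrite h3 // h3' //; exact: bs.
  + by move=> z; rewrite h4 h4'.
  + move=> z za; rewrite h5 // h5' //; by rewrite -h4.
- move=> x xn; have [i [j [ij Hs]]] := higman (fun k => mk (x k)).
  exists i, j; split => //; exact: mk_le (xn i) Hs.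
Qed.
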